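(* If $W\subseteq\ell^\infty$ is analytic with respect to the product topology on $\mathbb R^\omega$, then $\mathsf{HC}^*(W)=\bigcap_{w\in W}\mathsf{HC}(w)$ is a co-analytic subset of $\ell^2$.
   Context: $\omega=\{0,1,2,\dots\}$. $\ell^\infty$ is the set of bounded real sequences indexed by $\omega$, viewed as a subset of $\mathbb R^\omega$ with the product topology. $\ell^2$ is the Hilbert space of square-summable real sequences with its norm topology. For $w\in\ell^\infty$, $B_w:\ell^2\to\ell^2$ is $B_w(x)(i)=w(i)\,x(i+1)$. $\mathsf{HC}(w)$ is the set of $x\in\ell^2$ such that $\{B_w^k(x):k\in\omega\}$ is dense in $\ell^2$, and $\mathsf{HC}^*(W)=\bigcap_{w\in W}\mathsf{HC}(w)$. A set is analytic if it is a continuous image of a Borel subset of a Polish space, co-analytic if its complement is analytic. *)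

(* Defs.v *)
From HB Require Import structures.
From mathcomp Require Import all_boot all_order all_algebra.
From mathcomp Require Import all_classical all_reals all_analysis.
Set Implicit Arguments. Unset Strict Implicit. Unset Printing Implicit Defensive.
Import Order.TTheory GRing.Theory Num.Theory.
Import numFieldNormedType.Exports.
Local Open Scope classical_set_scope.
Local Open Scope ring_scope.

Section DST.
Variable R : realType.

Definition polish (T : topologicalType) : Prop :=
  exists d : T -> T -> R,
  [/\ [/\ (forall x y, 0 <= d x y),
      (forall x y, d x y = 0 <-> x = y),
      (forall x y, d x y = d y x)
    & (forall x y z, d x z <= d x y + d y z)],
      (forall A : set T, open A <->
         (forall x, A x -> exists2 e : R, 0 < e & [set y | d x y < e] `<=` A)),
      (forall u : nat -> T,
         (forall e : R, 0 < e -> exists N : nat, forall m n : nat,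
            (N <= m)%N -> (N <= n)%N -> d (u m) (u n) < e) ->
         exists l : T, u @ \oo --> l)
    & exists D : set T, countable D /\ dense D].

Definition borel_set (T : topologicalType) (B : set T) : Prop :=
  <<s [set U : set T | open U] >> B.

Definition analytic (X : topologicalType) (A : set X) : Prop :=
  exists (P : topologicalType) (B : set P) (f : P -> X),
    [/\ polish P, borel_set B, {within B, continuous f} & f @` B = A].

Definition coanalytic (X : topologicalType) (A : set X) : Prop :=
  analytic (~` A).

End DST.

Section Seq.
Variable R : realType.

Definition linf : set (nat -> R) :=
  [set w | exists M : R, forall i, `|w i| <= M].

(** squared l^2 distance (as an extended real, always defined) *)
Definition l2dist2 (x y : nat -> R) : \bar R :=
  (\sum_(0 <= k <oo) ((x k - y k) ^+ 2)%:E)%E.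

Definition l2pred (x : nat -> R) : bool :=
  `[< (\sum_(0 <= k <oo) ((x k) ^+ 2)%:E < +oo)%E >].

Definition l2 := {x : nat -> R | l2pred x}.
HB.instance Definition _ := [Choice of l2 by <:].

(** the norm topology of l^2: U is open iff it contains an l^2-ball
    (of squared radius e > 0) around each of its points *)
Definition l2_open (U : set l2) : Prop :=
  forall x, U x -> exists2 e : R, 0 < e &
    forall y : l2, (l2dist2 (val x) (val y) < e%:E)%E -> U y.

Lemma l2_openT : l2_open setT.
Proof. by move=> x _; exists 1. Qed.

Lemma l2_openI : setI_closed l2_open.
Proof.
move=> A B oA oB x [/oA [e1 e10 h1] /oB [e2 e20 h2]].
exists (Order.min e1 e2); first by rewrite lt_min e10 e20.
move=> y hy; split.
- apply: h1; apply: (lt_le_trans hy); rewrite lee_fin; by rewrite ge_min lexx.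
- apply: h2; apply: (lt_le_trans hy); rewrite lee_fin; by rewrite ge_min lexx orbT.
Qed.

Lemma l2_open_bigU (I : Type) (f : I -> set l2) :
  (forall i, l2_open (f i)) -> l2_open (\bigcup_i f i).
Proof.
move=> hf x [i _ fx]; have [e e0 h] := hf i x fx.
by exists e => // y /h fy; exists i.
Qed.

HB.instance Definition _ :=
  isOpenTopological.Build l2 l2_openT l2_openI l2_open_bigU.

Definition Bw (w x : nat -> R) : nat -> R := fun i => w i * x i.+1.

Definition HC (w : nat -> R) : set l2 :=
  [set x | dense [set y : l2 | exists k : nat, val y = iter k (Bw w) (val x)]].

Definition HCstar (W : set (nat -> R)) : set l2 :=
  \bigcap_(w in W) HC w.

End Seq.

(* Main.v *)
Require Import Defs.
From HB Require Import structures.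
From mathcomp Require Import all_boot all_order all_algebra.
From mathcomp Require Import all_classical all_reals all_analysis.
From mathcomp Require Import ring lra.
Set Implicit Arguments. Unset Strict Implicit. Unset Printing Implicit Defensive.
Import Order.TTheory GRing.Theory Num.Theory.
Import numFieldNormedType.Exports.
Local Open Scope classical_set_scope.
Local Open Scope ring_scope.
Section L2.
Variable R : realType.
Local Open Scope ereal_scope.

Lemma sqr_add_le (a b : R) : ((a + b) ^+ 2 <= 2 * a ^+ 2 + 2 * b ^+ 2)%R.
Proof. have := sqr_ge0 (a - b); rewrite !expr2; lra. Qed.

Lemma l2dist2_ge0 (x y : nat -> R) : 0 <= l2dist2 x y.
Proof. by apply: nneseries_ge0 => n _ _; rewrite lee_fin sqr_ge0. Qed.

Lemma l2dist2_sym (x y : nat -> R) : l2dist2 x y = l2dist2 y x.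
Proof.
rewrite /l2dist2; congr (limn _); apply/funext => n; apply: eq_bigr => i _.
by rewrite -sqrrN opprB.
Qed.

Lemma l2dist2_tri2 (x y z : nat -> R) :
  l2dist2 x z <= 2%:E * l2dist2 x y + 2%:E * l2dist2 y z.
Proof.
rewrite /l2dist2 -!nneseriesZl; last 2 first.
- by move=> i _; rewrite lee_fin sqr_ge0.
- by move=> i _; rewrite lee_fin sqr_ge0.
rewrite -nneseriesD; last 2 first.
- by move=> i _ _; rewrite -EFinM lee_fin mulr_ge0 // sqr_ge0.
- by move=> i _ _; rewrite -EFinM lee_fin mulr_ge0 // sqr_ge0.
apply: lee_nneseries => [i _ _|n _]; first by rewrite lee_fin sqr_ge0.
rewrite -!EFinM -EFinD lee_fin.
have -> : (x n - z n = (x n - y n) + (y n - z n))%R by rewrite addrA subrK.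
exact: sqr_add_le.
Qed.

End L2.
Section L2b.
Variable R : realType.
Local Open Scope ereal_scope.

Lemma psum_le_series (a : nat -> R) N : (forall k, 0 <= a k)%R ->
  (\sum_(0 <= k < N) a k)%:E <= \sum_(0 <= k <oo) (a k)%:E.
Proof.
move=> a0; rewrite -sumEFin; apply: nneseries_lim_ge => n _ _.
by rewrite lee_fin.
Qed.

Lemma series_le_psum (a : nat -> R) (s : R) : (forall k, 0 <= a k)%R ->
  (forall N, \sum_(0 <= k < N) a k <= s)%R ->
  \sum_(0 <= k <oo) (a k)%:E <= s%:E.
Proof.
move=> a0 hs; apply: lime_le.
  by apply: is_cvg_nneseries => n _ _; rewrite lee_fin.
by apply: nearW => N; rewrite sumEFin lee_fin.
Qed.

Lemma series_gtP (a : nat -> R) (s : R) : (forall k, 0 <= a k)%R ->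
  (s%:E < \sum_(0 <= k <oo) (a k)%:E) <-> exists N, (s < \sum_(0 <= k < N) a k)%R.
Proof.
move=> a0; split.
  move=> h; apply: contrapT => hn; move: h; apply/negP; rewrite -leNgt.
  apply: series_le_psum => // N; rewrite leNgt; apply/negP => hN.
  by apply: hn; exists N.
move=> [N hN]; apply: (lt_le_trans _ (psum_le_series N a0)).
by rewrite lte_fin.
Qed.

Lemma l2P (x : l2 R) : \sum_(0 <= k <oo) ((val x k) ^+ 2)%:E < +oo.
Proof. by case: x => x /= /asboolP. Qed.

Lemma l2dist2_0 (x : nat -> R) :
  l2dist2 x (fun _ => 0%R) = \sum_(0 <= k <oo) ((x k) ^+ 2)%:E.
Proof.
by rewrite /l2dist2; congr (limn _); apply/funext => n; apply: eq_bigr => i _; rewrite subr0.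
Qed.

Lemma l2dist2_fin (x y : l2 R) : l2dist2 (val x) (val y) < +oo.
Proof.
apply: (le_lt_trans (l2dist2_tri2 _ (fun _ => 0%R) _)).
rewrite (l2dist2_sym (fun _ => 0%R)) !l2dist2_0.
rewrite lte_add_pinfty // lte_mul_pinfty // ?lee_fin ?l2P //;
  by apply: nneseries_ge0 => n _ _; rewrite lee_fin sqr_ge0.
Qed.

Lemma l2pred_close (c v : nat -> R) : l2pred c -> l2dist2 c v < +oo -> l2pred v.
Proof.
move=> /asboolP hc hv; apply/asboolP.
rewrite -l2dist2_0.
apply: (le_lt_trans (l2dist2_tri2 _ c _)).
rewrite (l2dist2_sym _ c) l2dist2_0.
idtac.
rewrite lte_add_pinfty // lte_mul_pinfty // ?lee_fin //;
  try exact: l2dist2_ge0;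
  by apply: nneseries_ge0 => n _ _; rewrite lee_fin sqr_ge0.
Qed.

End L2b.
Section Mink.
Variable R : realType.

Lemma cs_fin N (a b : 'I_N -> R) :
  \sum_(i < N) a i * b i <=
  Num.sqrt (\sum_(i < N) a i ^+ 2) * Num.sqrt (\sum_(i < N) b i ^+ 2).
Proof.
set SA := \sum_(i < N) a i ^+ 2; set SB := \sum_(i < N) b i ^+ 2.
have SA0 : 0 <= SA by apply: sumr_ge0 => i _; exact: sqr_ge0.
have SB0 : 0 <= SB by apply: sumr_ge0 => i _; exact: sqr_ge0.
have [SAe|SAn] := eqVneq SA 0.
  rewrite big1 ?mulr_ge0 ?sqrtr_ge0 // => i _.
  have := @psumr_eq0P _ _ xpredT (fun i => a i ^+ 2) (fun i _ => sqr_ge0 (a i)) SAe i isT.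
  by move=> /eqP; rewrite sqrf_eq0 => /eqP ->; rewrite mul0r.
have [SBe|SBn] := eqVneq SB 0.
  rewrite big1 ?mulr_ge0 ?sqrtr_ge0 // => i _.
  have := @psumr_eq0P _ _ xpredT (fun i => b i ^+ 2) (fun i _ => sqr_ge0 (b i)) SBe i isT.
  by move=> /eqP; rewrite sqrf_eq0 => /eqP ->; rewrite mulr0.
set t := Num.sqrt SA; set u := Num.sqrt SB.
have tp : 0 < t by rewrite sqrtr_gt0 lt_neqAle eq_sym SAn SA0.
have up : 0 < u by rewrite sqrtr_gt0 lt_neqAle eq_sym SBn SB0.
have tu : 0 < 2 * t * u by rewrite !mulr_gt0.
rewrite -(ler_pM2l tu).
have h : forall i, 2 * t * u * (a i * b i) <= u ^+ 2 * a i ^+ 2 + t ^+ 2 * b i ^+ 2.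
  move=> i; have := sqr_ge0 (u * a i - t * b i).
  rewrite !expr2; lra.
apply: (le_trans (y := \sum_(i < N) (u ^+ 2 * a i ^+ 2 + t ^+ 2 * b i ^+ 2))).
  by rewrite mulr_sumr; apply: ler_sum => i _; exact: h.
rewrite big_split /= -!mulr_sumr -/SA -/SB.
rewrite -(sqr_sqrtr SA0) -(sqr_sqrtr SB0) -/t -/u.
rewrite !expr2; lra.
Qed.

Lemma mink_fin N (a b : 'I_N -> R) :
  \sum_(i < N) (a i + b i) ^+ 2 <=
  (Num.sqrt (\sum_(i < N) a i ^+ 2) + Num.sqrt (\sum_(i < N) b i ^+ 2)) ^+ 2.
Proof.
have SA0 : 0 <= \sum_(i < N) a i ^+ 2 by apply: sumr_ge0 => i _; exact: sqr_ge0.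
have SB0 : 0 <= \sum_(i < N) b i ^+ 2 by apply: sumr_ge0 => i _; exact: sqr_ge0.
have e : \sum_(i < N) (a i + b i) ^+ 2 =
  \sum_(i < N) a i ^+ 2 + 2 * \sum_(i < N) (a i * b i) + \sum_(i < N) b i ^+ 2.
  rewrite mulr_sumr -!big_split /=; apply: eq_bigr => i _; rewrite !expr2; ring.
rewrite e sqrrD (sqr_sqrtr SA0) (sqr_sqrtr SB0).
have := cs_fin a b; lra.
Qed.

End Mink.
Section L2metric.
Variable R : realType.

Definition l2d (x y : l2 R) : R := Num.sqrt (fine (l2dist2 (val x) (val y))).

Lemma l2dist2_finnum (x y : l2 R) : l2dist2 (val x) (val y) \is a fin_num.
Proof.
by rewrite ge0_fin_numE ?l2dist2_fin //; exact: l2dist2_ge0.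
Qed.

Lemma l2dist2E (x y : l2 R) : l2dist2 (val x) (val y) = ((l2d x y) ^+ 2)%:E.
Proof.
rewrite /l2d sqr_sqrtr ?fineK ?l2dist2_finnum //.
by rewrite fine_ge0 // l2dist2_ge0.
Qed.

Lemma l2d_ge0 x y : 0 <= l2d x y. Proof. exact: sqrtr_ge0. Qed.

Lemma l2d_sym x y : l2d x y = l2d y x.
Proof. by rewrite /l2d l2dist2_sym. Qed.

Lemma term_le_series (a : nat -> R) k : (forall k, 0 <= a k) ->
  ((a k)%:E <= \sum_(0 <= i <oo) (a i)%:E)%E.
Proof.
move=> a0; apply: le_trans (psum_le_series k.+1 a0).
by rewrite lee_fin big_nat_recr //= lerDr sumr_ge0.
Qed.

Lemma l2d_eq0 x y : l2d x y = 0 <-> x = y.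
Proof.
split; last by move=> ->; rewrite /l2d /l2dist2 /= (_ : (fun n => _) = fun=> 0%E) ?lim_cst //=
   ?sqrtr0 //; apply/funext => n; rewrite big1 // => i _; rewrite subrr expr0n.
move=> h; apply: val_inj; apply/funext => k.
have := l2dist2E x y; rewrite h expr0n /= => e.
have := @term_le_series (fun i => (val x i - val y i) ^+ 2) k (fun i => sqr_ge0 _).
rewrite -/(l2dist2 (val x) (val y)) e lee_fin => hk.
have : (val x k - val y k) ^+ 2 = 0 by apply/eqP; rewrite eq_le hk sqr_ge0.
by move/eqP; rewrite sqrf_eq0 subr_eq0 => /eqP.
Qed.

Lemma psum_l2d (x y : l2 R) N :
  \sum_(0 <= k < N) (val x k - val y k) ^+ 2 <= l2d x y ^+ 2.
Proof.
rewrite -lee_fin -l2dist2E; exact: psum_le_series (fun k => sqr_ge0 _).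
Qed.

Lemma l2d_tri x y z : l2d x z <= l2d x y + l2d y z.
Proof.
have h : (l2dist2 (val x) (val z) <= ((l2d x y + l2d y z) ^+ 2)%:E)%E.
  apply: series_le_psum => [k|N]; first exact: sqr_ge0.
  rewrite big_mkord.
  have e : \sum_(i < N) (val x i - val z i) ^+ 2 =
      \sum_(i < N) ((val x i - val y i) + (val y i - val z i)) ^+ 2.
    by apply: eq_bigr => i _; rewrite addrA subrK.
  rewrite e; apply: le_trans (mink_fin _ _) _.
  have hs : forall (u v : l2 R), Num.sqrt (\sum_(i < N) (val u i - val v i) ^+ 2) <= l2d u v.
    move=> u v; rewrite -(ger0_norm (l2d_ge0 u v)) -sqrtr_sqr ler_sqrt ?sqr_ge0 //.
    by rewrite -(big_mkord xpredT (fun i => (val u i - val v i) ^+ 2)); exact: psum_l2d.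
  rewrite ler_sqr ?nnegrE ?addr_ge0 ?sqrtr_ge0 ?l2d_ge0 //.
  by apply: lerD; apply: hs.
rewrite l2dist2E lee_fin in h.
by rewrite -(ler_sqr (l2d_ge0 _ _)) ?nnegrE ?addr_ge0 ?l2d_ge0.
Qed.

End L2metric.
Section L2dense.
Variable R : realType.

Lemma psum_mono (a : nat -> R) N M : (forall k, 0 <= a k) -> (N <= M)%N ->
  \sum_(0 <= k < N) a k <= \sum_(0 <= k < M) a k.
Proof.
move=> a0 NM; rewrite (big_cat_nat (leq0n N) NM) /= lerDl.
by apply: sumr_ge0 => i _.
Qed.

Lemma fin_support_l2 (v : nat -> R) M : (forall i, (M <= i)%N -> v i = 0) -> l2pred v.
Proof.
move=> hv; apply/asboolP.
apply: (le_lt_trans (series_le_psum (s := \sum_(0 <= k < M) v k ^+ 2) _ _)) => //.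
  by move=> k; exact: sqr_ge0.
move=> N; apply: le_trans (psum_mono (fun k => sqr_ge0 (v k)) (leq_addr M N)) _.
rewrite (big_cat_nat (leq0n M) (leq_addl N M)) /= [X in _ + X]big1_seq ?addr0 //.
move=> i /andP[_]; rewrite mem_index_iota => /andP[hi _].
by rewrite hv // expr0n.
exact: ltry.
Qed.

Definition qseq (s : seq rat) : nat -> R := fun i => ratr (nth 0 s i).

Lemma qseq_l2 s : l2pred (qseq s).
Proof.
apply: (@fin_support_l2 _ (size s)) => i hi.
by rewrite /qseq nth_default // rmorph0.
Qed.

Definition qel (s : seq rat) : l2 R := exist _ (qseq s) (qseq_l2 s).

Lemma countable_qel : countable (range qel).
Proof. exact: sub_countable (card_image_le qel setT) (countableP setT). Qed.

Lemma rat_approx (r d : R) : 0 < d -> exists q : rat, `|r - ratr q| < d.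
Proof.
move=> d0; have [|q] := @rat_in_itvoo R (r - d) (r + d); first lra.
rewrite in_itv /= => /andP[h1 h2]; exists q.
rewrite ltr_norml; apply/andP; split; lra.
Qed.

Local Open Scope ereal_scope.

Lemma l2_approx (y : l2 R) (e : R) : (0 < e)%R ->
  exists s, l2dist2 (val y) (qseq s) < e%:E.
Proof.
move=> e0.
have := @nneseries_tail_cvg R (fun k => ((val y k) ^+ 2)%:E) xpredT (l2P y).
move=> /(_ (fun k _ => sqr_ge0 _)) /fine_cvgP [_].
move=> /cvgrPdist_lt /(_ (e / 2)%R) [|N' _ hN]; first by rewrite divr_gt0.
set N := N'.
have hN' := hN N (leqnn N).
have tfin : \sum_(N <= k <oo) ((val y k) ^+ 2)%:E \is a fin_num.
  rewrite ge0_fin_numE; last by apply: nneseries_ge0 => n _ _; rewrite lee_fin sqr_ge0.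
  apply: le_lt_trans (l2P y).
  rewrite (nneseries_split 0 N) ?add0n; last by move=> k _; rewrite lee_fin sqr_ge0.
  by rewrite leeDr // sume_ge0 // => k _; rewrite lee_fin sqr_ge0.
move: hN'; rewrite sub0r normrN /= => hN'.
have tlt : \sum_(N <= k <oo) ((val y k) ^+ 2)%:E < (e / 2)%:E.
  rewrite -(fineK tfin) lte_fin; apply: le_lt_trans hN'; exact: ler_norm.
set d := Num.sqrt (e / 2 / (N%:R + 1)).
have d0 : (0 < d)%R by rewrite sqrtr_gt0 !divr_gt0 // ltr_wpDl.
have hq : forall i, exists q : rat, (`|val y i - ratr q| < d)%R.
  by move=> i; exact: rat_approx.
pose q i := projT1 (cid (hq i)).
have hqi i : (`|val y i - ratr (q i)| < d)%R by rewrite /q; case: cid.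
exists [seq q i | i <- iota 0 N].
rewrite /l2dist2 (nneseries_split 0 N); last by move=> k _; rewrite lee_fin sqr_ge0.
rewrite add0n.
have e2 : \sum_(N <= k <oo) ((val y k - qseq [seq q i | i <- iota 0 N] k) ^+ 2)%:E =
          \sum_(N <= k <oo) ((val y k) ^+ 2)%:E.
  congr (limn _); apply/funext => n; apply: eq_big_nat => i /andP[hi _].
  by rewrite /qseq nth_default ?size_map ?size_iota // rmorph0 subr0.
rewrite e2 [X in _ < X%:E](splitr e) EFinD sumEFin; apply: lee_ltD => //.
rewrite lee_fin.
apply: (le_trans (y := (\sum_(0 <= k < N) (e / 2 / (N%:R + 1)))%R)).
  apply: ler_sum_nat => i /andP[_ hi].
  rewrite /qseq (nth_map 0%N) ?size_iota // nth_iota // add0n.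
  rewrite -(sqr_sqrtr (a := (e / 2 / (N%:R + 1))%R)); last by rewrite ltW // !divr_gt0 // ltr_wpDl.
  rewrite -/d -real_normK ?num_real // ler_sqr ?nnegrE ?normr_ge0 ?ltW //.
  exact: hqi.
rewrite sumr_const_nat subn0 -(mulr_natr (e / 2 / (N%:R + 1)) N).
have hN1 : (0 < N%:R + 1 :> R)%R by rewrite ltr_wpDl.
rewrite -mulrA ler_piMr ?divr_ge0 ?ltW //.
by rewrite mulrC ltr_pdivrMr // mul1r ltrDl.
Qed.

End L2dense.
Section L2polish.
Variable R : realType.

Lemma l2_openE (A : set (l2 R)) : open A <-> l2_open A.
Proof. by []. Qed.

Lemma l2_openP (A : set (l2 R)) : open A <->
  (forall x, A x -> exists2 e : R, 0 < e & [set y | l2d x y < e] `<=` A).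
Proof.
rewrite l2_openE; split.
  move=> h x Ax; have [e e0 he] := h x Ax.
  exists (Num.sqrt e); first by rewrite sqrtr_gt0.
  move=> y /= hy; apply: he; rewrite l2dist2E lte_fin.
  rewrite -(sqr_sqrtr (ltW e0)) ltr_sqr ?nnegrE ?l2d_ge0 ?sqrtr_ge0 //.
move=> h x Ax; have [e e0 he] := h x Ax.
exists (e ^+ 2); first by rewrite exprn_gt0.
move=> y; rewrite l2dist2E lte_fin ltr_sqr ?nnegrE ?l2d_ge0 ?ltW // => hy.
exact: he.
Qed.

Lemma cvg_sum_nat {T : Type} (F : set_system T) {FF : Filter F}
  (f : nat -> T -> R) (a : nat -> R) N :
  (forall i, f i x @[x --> F] --> a i) ->
  (\sum_(0 <= i < N) f i x) @[x --> F] --> \sum_(0 <= i < N) a i.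
Proof.
move=> h; elim: N => [|N IH].
  rewrite big_geq //; under eq_cvg do rewrite big_geq //; exact: cvg_cst.
rewrite big_nat_recr //=; under eq_cvg do rewrite big_nat_recr //=.
exact: cvgD.
Qed.

Lemma coord_le_l2d (x y : l2 R) i : `|val x i - val y i| <= l2d x y.
Proof.
have := @term_le_series R (fun k => (val x k - val y k) ^+ 2) i (fun k => sqr_ge0 _).
rewrite -/(l2dist2 (val x) (val y)) l2dist2E lee_fin => h.
by rewrite -(ler_sqr (normr_ge0 _) (l2d_ge0 x y)) real_normK ?num_real.
Qed.

Lemma l2_complete (u : nat -> l2 R) :
  (forall e : R, 0 < e -> exists N : nat, forall m n : nat,
     (N <= m)%N -> (N <= n)%N -> l2d (u m) (u n) < e) ->
  exists l : l2 R, u @ \oo --> l.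
Proof.
move=> hc.
have cvi : forall i, cvg ((fun n => val (u n) i) @ \oo).
  move=> i; apply/cauchy_cvgP; apply: cauchy_exP => e e0.
  have [N hN] := hc e e0; exists (val (u N) i).
  exists N => // n /= Nn; rewrite /ball /=.
  exact: le_lt_trans (coord_le_l2d _ _ _) (hN _ _ (leqnn N) Nn).
pose l i := lim ((fun n => val (u n) i) @ \oo).
have cl : forall i, (fun n => val (u n) i) @ \oo --> l i by move=> i; exact: cvi.
have bnd : forall eps : R, 0 < eps -> exists N, forall m, (N <= m)%N ->
    (l2dist2 (val (u m)) l <= (eps ^+ 2)%:E)%E.
  move=> eps eps0; have [N hN] := hc eps eps0; exists N => m Nm.
  apply: series_le_psum => [k|K]; first exact: sqr_ge0.
  have cs : (\sum_(0 <= k < K) (val (u m) k - val (u n) k) ^+ 2) @[n --> \oo] -->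
            \sum_(0 <= k < K) (val (u m) k - l k) ^+ 2.
    apply: cvg_sum_nat => k.
    under eq_cvg do rewrite expr2; rewrite expr2.
    by apply: cvgM; apply: cvgB => //; exact: cvg_cst.
  apply: (cvgr_to_le cs); exists N => // n /= Nn.
  apply: le_trans (psum_l2d _ _ _) _.
  by rewrite ler_sqr ?nnegrE ?l2d_ge0 ?ltW // ?hN.
have [N1 hN1] := bnd 1 ltr01.
have ll2 : l2pred l.
  apply: (l2pred_close (svalP (u N1))).
  by apply: le_lt_trans (hN1 _ (leqnn _)) _; exact: ltry.
exists (exist _ l ll2) => A /=.
rewrite nbhsE => -[U [oU Ul] UA].
have [e e0 he] := (l2_openE U).1 oU _ Ul.
have [|N hN] := bnd (Num.sqrt (e / 2)); first by rewrite sqrtr_gt0 divr_gt0.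
exists N => // m /= Nm; apply: UA; apply: he.
rewrite /= l2dist2_sym; apply: le_lt_trans (hN _ Nm) _.
by rewrite sqr_sqrtr ?divr_ge0 ?ltW // lte_fin ltr_pdivrMr // ltr_pMr // ltr1n.
Qed.

Lemma l2_dense : dense (range (@qel R)).
Proof.
move=> O [y Oy] oO.
have [e e0 he] := (l2_openE O).1 oO _ Oy.
have [s hs] := l2_approx y e0.
exists (qel R s); split; last by exists s.
exact: he.
Qed.

Lemma polish_l2 : polish R (l2 R).
Proof.
exists (@l2d R); split.
- split; [exact: l2d_ge0 | exact: l2d_eq0 | exact: l2d_sym | exact: l2d_tri].
- exact: l2_openP.
- exact: l2_complete.
- exists (range (@qel R)); split; [exact: countable_qel | exact: l2_dense].
Qed.

End L2polish.
Section PolishGen.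
Variable R : realType.

Lemma mball_open (T : topologicalType) (d : T -> T -> R)
  (dtri : forall x y z, d x z <= d x y + d y z)
  (dopen : forall A : set T, open A <->
         (forall x, A x -> exists2 e : R, 0 < e & [set y | d x y < e] `<=` A))
  x e : open [set y | d x y < e].
Proof.
apply/dopen => y /= hy; exists (e - d x y); first by rewrite subr_gt0.
move=> z /= hz; apply: le_lt_trans (dtri x y z) _; lra.
Qed.

Lemma mnbhsP (T : topologicalType) (d : T -> T -> R)
  (d0 : forall x y, d x y = 0 <-> x = y)
  (dtri : forall x y z, d x z <= d x y + d y z)
  (dopen : forall A : set T, open A <->
         (forall x, A x -> exists2 e : R, 0 < e & [set y | d x y < e] `<=` A))
  x (A : set T) : nbhs x A <-> exists2 e : R, 0 < e & [set y | d x y < e] `<=` A.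
Proof.
split.
  rewrite nbhsE => -[B [oB Bx] BA].
  have [e e0 he] := (dopen B).1 oB x Bx.
  by exists e => // y /he /BA.
move=> [e e0 he]; rewrite nbhsE; exists [set y | d x y < e] => //.
split; first exact: mball_open.
by rewrite /= (d0 x x).2.
Qed.

Lemma polishX (T1 T2 : topologicalType) :
  polish R T1 -> polish R T2 -> polish R (T1 * T2)%type.
Proof.
move=> [d1 [[d1ge0 d10 d1sym d1tri] d1open d1cpl [D1 [D1c D1d]]]].
move=> [d2 [[d2ge0 d20 d2sym d2tri] d2open d2cpl [D2 [D2c D2d]]]].
pose d (z w : T1 * T2) := d1 z.1 w.1 + d2 z.2 w.2.
have dle1 z w : d1 z.1 w.1 <= d z w by rewrite /d lerDl.
have dle2 z w : d2 z.2 w.2 <= d z w by rewrite /d lerDr.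
exists d; split.
- split.
  + by move=> z w; rewrite addr_ge0.
  + move=> [a b] [a' b']; rewrite /d /=; split.
      move/eqP; rewrite paddr_eq0 // => /andP[/eqP/d10 -> /eqP/d20 ->] //.
    by case=> -> ->; rewrite (d10 a' a').2 // (d20 b' b').2 // addr0.
  + by move=> z w; rewrite /d d1sym d2sym.
  + move=> z w v; rewrite /d; have := d1tri z.1 w.1 v.1; have := d2tri z.2 w.2 v.2.
    lra.
- move=> A; rewrite openE; split.
    move=> oA z Az; have [[P Q] [/= Pz Qz] PQA] := oA z Az.
    have [e1 e10 h1] := (mnbhsP d10 d1tri d1open z.1 P).1 Pz.
    have [e2 e20 h2] := (mnbhsP d20 d2tri d2open z.2 Q).1 Qz.
    exists (Order.min e1 e2); first by rewrite lt_min e10 e20.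
    move=> w /= hw; apply: PQA; split.
      apply: h1 => /=; apply: le_lt_trans (dle1 z w) _.
      by apply: lt_le_trans hw _; rewrite ge_min lexx.
    apply: h2 => /=; apply: le_lt_trans (dle2 z w) _.
    by apply: lt_le_trans hw _; rewrite ge_min lexx orbT.
  move=> h z Az; have [e e0 he] := h z Az.
  exists ([set a | d1 z.1 a < e / 2], [set b | d2 z.2 b < e / 2]).
    split; apply/mnbhsP => //; exists (e / 2) => //; by rewrite divr_gt0.
  move=> [a b] /= [ha hb]; apply: he; rewrite /d /=.
  by rewrite [e]splitr ltrD.
- move=> u hu.
  have [l1 c1] : exists l1 : T1, (fun n => (u n).1) @ \oo --> l1.
    apply: d1cpl => e e0; have [N hN] := hu e e0; exists N => m n hm hn.
    exact: le_lt_trans (dle1 _ _) (hN _ _ hm hn).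
  have [l2 c2] : exists l2 : T2, (fun n => (u n).2) @ \oo --> l2.
    apply: d2cpl => e e0; have [N hN] := hu e e0; exists N => m n hm hn.
    exact: le_lt_trans (dle2 _ _) (hN _ _ hm hn).
  exists (l1, l2).
  move=> A [[P Q]] /= [hP hQ] PQA.
  have h1 : \forall n \near \oo, P (u n).1 := c1 _ hP.
  have h2 : \forall n \near \oo, Q (u n).2 := c2 _ hQ.
  have h12 : \forall n \near \oo, P (u n).1 /\ Q (u n).2 by apply: filterI.
  exact: (filterS (fun n (k : P (u n).1 /\ Q (u n).2) => PQA (u n) k) h12).
- exists (D1 `*` D2); split; first exact: countableX.
  move=> O [z Oz] oO.
  have := oO; rewrite openE => /(_ z Oz) [[P Q]] /= [Pz Qz] PQO.
  have [a [Pa D1a]] := D1d (P°) (ex_intro _ z.1 Pz) (@open_interior _ P).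
  have [b [Qb D2b]] := D2d (Q°) (ex_intro _ z.2 Qz) (@open_interior _ Q).
  exists (a, b); split; last by split.
  by apply: PQO; split; apply: interior_subset.
Qed.

End PolishGen.
Section Borel.

Lemma borel_open (T : topologicalType) (U : set T) : open U -> borel_set U.
Proof. by move=> oU; apply: sub_sigma_algebra. Qed.

Lemma borel_bigcup (T : topologicalType) (A : (set T)^nat) :
  (forall i, borel_set (A i)) -> borel_set (\bigcup_i A i).
Proof. exact: sigma_algebra_bigcup. Qed.

Lemma borel_setC (T : topologicalType) (A : set T) : borel_set A -> borel_set (~` A).
Proof. by move=> h; rewrite -setTD; exact: sigma_algebraCD. Qed.

Lemma borel_bigcap (T : topologicalType) (A : (set T)^nat) :
  (forall i, borel_set (A i)) -> borel_set (\bigcap_i A i).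
Proof.
move=> h; rewrite -[X in borel_set X]setCK setC_bigcap.
by apply: borel_setC; apply: borel_bigcup => i; apply: borel_setC.
Qed.

Lemma borel_setI (T : topologicalType) (A B : set T) :
  borel_set A -> borel_set B -> borel_set (A `&` B).
Proof.
move=> hA hB; rewrite -[X in borel_set X]setCK setCI.
apply: borel_setC; rewrite -bigcup2E; apply: borel_bigcup => -[|[|i]] /=;
  by [apply: borel_setC | apply: borel_setC | apply: sigma_algebra0].
Qed.

Lemma borel_preimage (T U : topologicalType) (f : T -> U) (B : set U) :
  continuous f -> borel_set B -> borel_set (f @^-1` B).
Proof.
move=> cf; apply: (@smallest_sub _ _ _ [set A | borel_set (f @^-1` A)]).
  split.
  - by rewrite /= preimage_set0; apply: sigma_algebra0.
  - by move=> A /= hA; rewrite setTD preimage_setC -setTD; apply: sigma_algebraCD.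
  - by move=> A hA; rewrite /= preimage_bigcup; apply: borel_bigcup.
move=> A /= oA; apply: borel_open; exact: open_comp.
Qed.

End Borel.
Section Cont.
Variable R : realType.

Lemma inv_small (e : R) : 0 < e -> exists m : nat, (m.+1%:R)^-1 < e.
Proof.
move=> e0; exists (Num.truncn e^-1).
have h := truncnS_gt e^-1.
by rewrite invf_plt ?posrE ?ltr0Sn.
Qed.

Lemma l2_nbhsP (x : l2 R) (A : set (l2 R)) :
  nbhs x A <-> exists2 e : R, 0 < e & [set y | l2d x y < e] `<=` A.
Proof. exact: (mnbhsP (@l2d_eq0 R) (@l2d_tri R) (@l2_openP R)). Qed.

Lemma coord_continuous i : continuous (fun x : l2 R => val x i).
Proof.
move=> x A /= /nbhs_ballP [e e0 he].
apply/l2_nbhsP; exists e => // y /= hy; apply: he.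
rewrite /ball /=; exact: le_lt_trans (coord_le_l2d _ _ _) hy.
Qed.

Lemma iter_Bw_cont (S : topologicalType) (g : S -> nat -> R)
  (hg : forall i, continuous (fun p => g p i)) k i :
  continuous (fun z : S * l2 R => iter k (Bw (g z.1)) (val z.2) i).
Proof.
elim: k i => [|k IH] i /=.
  move=> z; apply: (@continuous_comp _ _ _ snd (fun x : l2 R => val x i)).
    exact: cvg_snd.
  exact: coord_continuous.
move=> z; rewrite /Bw.
apply: (@cvgM _ _ _ _ (fun z : S * l2 R => g z.1 i)
          (fun z => iter k (Bw (g z.1)) (val z.2) i.+1)); last exact: IH.
apply: (@continuous_comp _ _ _ fst (fun p => g p i)); first exact: cvg_fst.
exact: hg.
Qed.

Definition Phi (S : Type) (g : S -> nat -> R) (c : nat -> R) k N (z : S * l2 R) : R :=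
  \sum_(0 <= i < N) (c i - iter k (Bw (g z.1)) (val z.2) i) ^+ 2.

Lemma Phi_cont (S : topologicalType) (g : S -> nat -> R)
  (hg : forall i, continuous (fun p => g p i)) c k N :
  continuous (Phi g c k N).
Proof.
move=> z; apply: cvg_sum_nat => i.
under eq_cvg do rewrite expr2; rewrite expr2.
by apply: cvgM; apply: cvgB; try exact: cvg_cst; exact: iter_Bw_cont.
Qed.

Lemma Phi_open (S : topologicalType) (g : S -> nat -> R)
  (hg : forall i, continuous (fun p => g p i)) c k N s :
  open [set z | s < Phi g c k N z].
Proof.
have := (continuousP (Phi g c k N)).1 (Phi_cont (c := c) (k := k) (N := N) hg) _ (@open_gt _ s).
by [].
Qed.

End Cont.
Section Rel.

Lemma rel_open_borel (P Q : topologicalType) (B : set P)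
  (U : set (subspace B * Q)%type) :
  open U -> borel_set B -> borel_set (((@fst P Q) @^-1` B) `&` (U : set (P * Q))).
Proof.
move=> oU bB.
pose O : set (P * Q) := [set z | exists V W, [/\ open V, open W, V z.1, W z.2 &
   forall p q, V p -> W q -> B p -> U (p, q)]].
have oO : open O.
  rewrite openE => z [V [W [oV oW Vz Wz h]]].
  exists (V, W); first by split; apply: open_nbhs_nbhs; split.
  by move=> [p q] /= [Vp Wq]; exists V, W; split.
have e : ((@fst P Q) @^-1` B) `&` (U : set (P * Q)) = ((@fst P Q) @^-1` B) `&` O.
  apply/seteqP; split => -[p q] /= [Bp h]; split => //.
    have := oU; rewrite openE => /(_ (p, q) h) [[P1 Q1]] /= [hP1 hQ1] sub.
    have [V hV eV] := (@nbhs_subspace_ex _ B P1 p Bp).1 hP1.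
    exists V°, Q1°; split => //; try exact: open_interior.
    move=> p' q' /interior_subset Vp' /interior_subset Qq' Bp'.
    apply: sub; split => //=.
    have : (V `&` B) p' by split.
    by rewrite -eV => -[].
  by case: h => V [W [_ _ Vp Wq hh]]; apply: hh.
rewrite e; apply: borel_setI; last exact: borel_open.
apply: borel_preimage => //; move=> z; exact: cvg_fst.
Qed.

End Rel.

Section HCchar.
Variable R : realType.
Local Open Scope ereal_scope.

Lemma series_geP (a : nat -> R) (r : R) : (forall k, 0 <= a k)%R ->
  (r%:E <= \sum_(0 <= k <oo) (a k)%:E) <->
  forall m : nat, exists N, (r - (m.+1%:R)^-1 < \sum_(0 <= k < N) a k)%R.
Proof.
move=> a0; split.
  move=> h m; apply/(series_gtP _ a0); apply: lt_le_trans h.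
  by rewrite lte_fin gtrBl invr_gt0 ltr0Sn.
move=> h; rewrite leNgt; apply/negP => hlt.
have fS : \sum_(0 <= k <oo) (a k)%:E \is a fin_num.
  rewrite ge0_fin_numE; first exact: lt_trans hlt (ltry _).
  by apply: nneseries_ge0 => n _ _; rewrite lee_fin.
move: hlt; rewrite -(fineK fS) lte_fin => hlt.
have [|m hm] := @inv_small R (r - fine (\sum_(0 <= k <oo) (a k)%:E)%E); first by rewrite subr_gt0.
have [N hN] := h m.
have := psum_le_series N a0; rewrite -(fineK fS) lee_fin => hle.
set t := fine _ in hlt hm hle.
set u := (\sum_(0 <= k < N) a k)%R in hN hle.
have h1 : (m.+1%:R^-1 < r - t)%R := hm.
have h2 : (r - m.+1%:R^-1 < u)%R := hN.
have h3 : (u <= t)%R := hle.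
move: h1 h2 h3; set v := (m.+1%:R^-1)%R => h1 h2 h3.
lra.
Qed.

Definition dec (n : nat) : seq rat * nat := odflt ([::], 0%N) (unpickle n).
Definition cen n : nat -> R := qseq R (dec n).1.
Definition rad n : R := ((dec n).2.+1%:R)^-1.

Lemma rad_gt0 n : (0 < rad n)%R.
Proof. by rewrite invr_gt0 ltr0Sn. Qed.

Lemma HC_char (w : nat -> R) (x : l2 R) : ~ HC w x <->
  exists n, forall k, (rad n)%:E <= l2dist2 (cen n) (iter k (Bw w) (val x)).
Proof.
split; last first.
  move=> [n hn] hd.
  set c := qel R (dec n).1.
  set U := [set y | (l2d c y < Num.sqrt (rad n))%R].
  have hU0 : U !=set0.
    by exists c; rewrite /U /= (l2d_eq0 c c).2 // sqrtr_gt0 rad_gt0.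
  have oU : open U by exact: (mball_open (@l2d_tri R) (@l2_openP R)).
  have [y [Uy [k ek]]] := hd U hU0 oU.
  move: (hn k); rewrite -ek -/(cen n) (_ : cen n = val c) // l2dist2E lee_fin.
  rewrite leNgt => /negP; apply.
  rewrite -[X in (_ < X)%R](sqr_sqrtr (ltW (rad_gt0 n))).
  by rewrite ltr_sqr ?nnegrE ?l2d_ge0 ?sqrtr_ge0.
move=> hnd.
have [ O0 [[y hy] OS]] := denseNE hnd.
move: hy; rewrite open_nbhsE => -[oO Oy].
have Oy' := nbhs_singleton Oy.
have [e e0 he] := (l2_openE O0).1 oO y Oy'.
have [|s hs] := @l2_approx R y (e / 4)%R; first by rewrite divr_gt0.
have [|m hm] := @inv_small R (e / 4)%R; first by rewrite divr_gt0.
exists (pickle (s, m)) => k.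
have hd : dec (pickle (s, m)) = (s, m) by rewrite /dec pickleK.
rewrite /cen /rad hd /=.
rewrite leNgt; apply/negP => hk.
set it := iter k (Bw w) (val x) in hk.
have fB : l2dist2 (qseq R s) it \is a fin_num.
  by rewrite ge0_fin_numE ?l2dist2_ge0 // (lt_trans hk) ?ltry.
have fA : l2dist2 (val y) (qseq R s) \is a fin_num.
  by rewrite ge0_fin_numE ?l2dist2_ge0 // (lt_trans hs) ?ltry.
have pit : l2pred it by apply: (l2pred_close (qseq_l2 R s)); rewrite (lt_trans hk) ?ltry.
pose z : l2 R := exist _ it pit.
have Oz : O0 z.
  apply: he; rewrite /=; apply: le_lt_trans (l2dist2_tri2 _ (qseq R s) _) _.
  rewrite -(fineK fA) -(fineK fB) -!EFinM -EFinD lte_fin.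
  move: hs hk; rewrite -(fineK fA) -(fineK fB) !lte_fin.
  set a := fine _; set b := fine _ => ha hb.
  move: hm; set v := (m.+1%:R^-1)%R => hv.
  have h1 : (a < e / 4)%R := ha.
  have h2 : (b < v)%R := hb.
  have h3 : (v < e / 4)%R := hv.
  rewrite /=.
  lra.
have : (O0 `&` [set y0 | exists k0, val y0 = iter k0 (Bw w) (val x)]) z.
  by split => //; exists k.
by rewrite OS.
Qed.

End HCchar.
Unset Implicit Arguments.
Local Close Scope ring_scope.
Theorem proposition1 (R : realType) (W : set {ptws nat -> R}) :
  W `<=` @linf R -> analytic R W -> coanalytic R (HCstar W).
Proof.
move=> _ [P [B [g [hP hB hg hW]]]].
have hgi : forall i, continuous (fun p : subspace B => g p i).
  move=> i p; apply: (@continuous_comp _ _ _ (from_subspace B g) (fun f => f i)).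
    exact: hg.
  exact: (@proj_continuous nat (fun _ => R) i).
rewrite /coanalytic.
exists (P * l2 R)%type, [set z | B z.1 /\ ~ HC (g z.1) z.2], snd.
split.
- exact: polishX hP (polish_l2 R).
- pose E n k m N := [set z : subspace B * l2 R |
      (rad R n - (m.+1%:R)^-1 < Phi g (cen R n) k N z)%R].
  have -> : [set z : P * l2 R | B z.1 /\ ~ HC (g z.1) z.2] =
    \bigcup_n \bigcap_k \bigcap_m \bigcup_N
       (((@fst P (l2 R)) @^-1` B) `&` (E n k m N : set (P * l2 R))).
    apply/seteqP; split.
      move=> [p x] /= [Bp /HC_char [n hn]]; exists n => // k _ m _.
      have [N hN] := (series_geP (rad R n)
        (fun k0 => sqr_ge0 (cen R n k0 - iter k (Bw (g p)) (val x) k0))).1 (hn k) m.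
      by exists N.
    move=> [p x] /= [n _ h].
    have [_ _ [Bp _]] := h 0%N I 0%N I.
    split => //; apply/HC_char; exists n => k.
    apply/(series_geP (rad R n)
        (fun k0 => sqr_ge0 (cen R n k0 - iter k (Bw (g p)) (val x) k0))) => m.
    by have [N _ [_ hN]] := h k I m I; exists N.
  apply: borel_bigcup => n; apply: borel_bigcap => k; apply: borel_bigcap => m.
  apply: borel_bigcup => N; apply: rel_open_borel => //.
  exact: Phi_open.
- by apply: continuous_subspaceT => z; exact: cvg_snd.
- apply/seteqP; split.
    move=> _ [[p x] [Bp nh] <-] /= hx; apply: nh; apply: hx.
    by rewrite -hW; exists p.
  move=> x /= hx.
  have [w Ww nw] : exists2 w, W w & ~ HC w x.
    apply: contrapT => hn; apply: hx => w Ww; apply: contrapT => nw.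
    by apply: hn; exists w.
  move: Ww; rewrite -hW => -[p Bp gp].
  by exists (p, x) => //=; split => //; rewrite gp.
Qed.
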